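(* Consider the closed-loop system described in the context, with the controller given by the Hamiltonian parameterization $a=J_0R+bJb^{T}J_0/2$, $c=J_2\mathbf{I}^{T}b^{T}J_0$ for fixed $b$, and suppose $\mathcal{A}$ is Hurwitz. Then the second Fréchet derivative of $E$ with respect to $R\in\mathbb{S}_n$ is the self-adjoint operator on $\mathbb{S}_n$ $$\partial_R^2E=4\,\mathcal{J}^{\dagger}\big(\mathcal{Q}\mathcal{L}_{\mathcal{A}}\mathcal{S}\mathcal{P}+\mathcal{P}\mathcal{L}_{\mathcal{A}^{T}}\mathcal{S}\mathcal{Q}\big)\mathcal{J},$$ where $\mathcal{J}:\mathbb{S}_n\to\mathbb{R}^{2n\times2n}$, $\mathcal{J}(M):=\begin{bmatrix}0_n\\ J_0\end{bmatrix}M\begin{bmatrix}0_n & I_n\end{bmatrix}$, $\mathcal{J}^{\dagger}$ is its adjoint with respect to the Frobenius inner products, $\mathcal{Q}(X):=QX$ and $\mathcal{P}(X):=XP$ for $X\in\mathbb{R}^{2n\times 2n}$, $\mathcal{S}(X):=(X+X^{T})/2$, and for a Hurwitz matrix $F$, $\mathcal{L}_F(M):=\int_0^{+\infty}e^{Ft}Me^{F^{T}t}\,dt$ (the unique solution $N$ of $FN+NF^{T}+M=0$).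
   Context: Let $n=2\nu$, $m_1=2\mu_1$, $m_2=2\mu_2$, and let $p,p_0$ be positive integers. Plant matrices: $A\in\mathbb{R}^{n\times n}$, $B_1\in\mathbb{R}^{n\times m_1}$, $B_2\in\mathbb{R}^{n\times m_2}$, $C\in\mathbb{R}^{p\times n}$, $D\in\mathbb{R}^{p\times m_1}$, $C_0\in\mathbb{R}^{p_0\times n}$, $D_0\in\mathbb{R}^{p_0\times m_2}$. $J_0,J_1,J_2$ are the canonical real antisymmetric matrices of orders $n,m_1,m_2$ (block diagonal with copies of $\begin{bmatrix}0&1\\-1&0\end{bmatrix}$). $J:=\begin{bmatrix}J_2&0\\0&DJ_1D^{T}\end{bmatrix}$, $\mathbf{I}:=\begin{bmatrix}I_{m_2}\\0\end{bmatrix}\in\mathbb{R}^{(m_2+p)\times m_2}$, $\mathbb{S}_n$ is the space of real symmetric $n\times n$ matrices. $b\in\mathbb{R}^{n\times(m_2+p)}$, $B:=[\,B_1\ \ B_2\,]$, $\mathbf{C}:=\begin{bmatrix}0\\ C\end{bmatrix}$, $\mathbf{D}:=\begin{bmatrix}0 & I_{m_2}\\ D & 0\end{bmatrix}$. Closed-loop matrices: $\mathcal{A}:=\begin{bmatrix}A & B_2c\\ b\mathbf{C} & a\end{bmatrix}$, $\mathcal{B}:=\begin{bmatrix}B\\ b\mathbf{D}\end{bmatrix}$, $\mathcal{C}:=\begin{bmatrix}C_0 & D_0c\end{bmatrix}$. When $\mathcal{A}$ is Hurwitz, $P,Q$ are the unique solutions of $\mathcal{A}P+P\mathcal{A}^{T}+\mathcal{B}\mathcal{B}^{T}=0$,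 $\mathcal{A}^{T}Q+Q\mathcal{A}+\mathcal{C}^{T}\mathcal{C}=0$, and $E:=\mathrm{Tr}(\mathcal{C}P\mathcal{C}^{T})$. *)

(* Defs.v *)
From HB Require Import structures.
From mathcomp Require Import all_boot all_order all_algebra.
From mathcomp Require Import all_classical all_reals all_analysis.
From mathcomp Require Import complex.
Import numFieldNormedType.Exports.
Set Implicit Arguments.
Unset Strict Implicit.
Unset Printing Implicit Defensive.
Import Order.TTheory GRing.Theory Num.Theory.
Local Open Scope ring_scope.

Section Defs.
Variable R : realType.

(* canonical real antisymmetric matrix of order k.*2: block diagonal with
   copies of [[0,1],[-1,0]] *)
Definition Jcan (k : nat) : 'M[R]_(k.*2) :=
  \matrix_(i, j) (if ~~ odd i && (val j == (val i).+1) then 1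
                  else if odd i && (val i == (val j).+1) then -1 else 0).

Definition hurwitz (k : nat) (F : 'M[R]_k) : Prop :=
  forall z : R[i], root (map_poly (fun x : R => (x%:C)%C) (char_poly F)) z ->
    complex.Re z < 0.

Definition lyap (k : nat) (F M : 'M[R]_k) : 'M[R]_k :=
  xget 0 [set N : 'M[R]_k | F *m N + N *m F^T + M = 0].

Definition frob (k l : nat) (X Y : 'M[R]_(k, l)) : R := \tr (X^T *m Y).

Definition symmetricb (k : nat) (M : 'M[R]_k) : Prop := M^T = M.

Definition symp (k : nat) (X : 'M[R]_k) : 'M[R]_k := 2^-1 *: (X + X^T).

Variables (nu mu1 mu2 p p0 : nat).
Local Notation n := (nu.*2).
Local Notation m1 := (mu1.*2).
Local Notation m2 := (mu2.*2).
Variables (A : 'M[R]_n) (B1 : 'M[R]_(n, m1)) (B2 : 'M[R]_(n, m2))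
  (C : 'M[R]_(p, n)) (D : 'M[R]_(p, m1)) (C0 : 'M[R]_(p0, n))
  (D0 : 'M[R]_(p0, m2)) (b : 'M[R]_(n, m2 + p)).

Definition Jbig : 'M[R]_(m2 + p) :=
  block_mx (Jcan mu2) 0 0 (D *m Jcan mu1 *m D^T).
Definition Ibold : 'M[R]_(m2 + p, m2) := col_mx 1%:M 0.
Definition Bcat : 'M[R]_(n, m1 + m2) := row_mx B1 B2.
Definition Cbold : 'M[R]_(m2 + p, n) := col_mx 0 C.
Definition Dbold : 'M[R]_(m2 + p, m1 + m2) :=
  block_mx 0 1%:M D 0.

Definition ctrl_a (Rm : 'M[R]_n) : 'M[R]_n :=
  Jcan nu *m Rm + 2^-1 *: (b *m Jbig *m b^T *m Jcan nu).
Definition ctrl_c : 'M[R]_(m2, n) :=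
  Jcan mu2 *m Ibold^T *m b^T *m Jcan nu.

Definition Acl (Rm : 'M[R]_n) : 'M[R]_(n + n) :=
  block_mx A (B2 *m ctrl_c) (b *m Cbold) (ctrl_a Rm).
Definition Bcl : 'M[R]_(n + n, m1 + m2) := col_mx Bcat (b *m Dbold).
Definition Ccl : 'M[R]_(p0, n + n) := row_mx C0 (D0 *m ctrl_c).

Definition Pgram (Rm : 'M[R]_n) : 'M[R]_(n + n) := lyap (Acl Rm) (Bcl *m Bcl^T).
Definition Qgram (Rm : 'M[R]_n) : 'M[R]_(n + n) := lyap (Acl Rm)^T (Ccl^T *m Ccl).

Definition Ecost (Rm : 'M[R]_n) : R := \tr (Ccl *m Pgram Rm *m Ccl^T).

Definition Jop (M : 'M[R]_n) : 'M[R]_(n + n) :=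
  col_mx (0 : 'M[R]_n) (Jcan nu) *m M *m row_mx (0 : 'M[R]_n) 1%:M.

(* adjoint of Jop : S_n -> R^{2n x 2n} w.r.t. Frobenius inner products:
   the orthogonal projection onto S_n of [0; J0]^T Y [0 I]^T *)
Definition Jadj (Y : 'M[R]_(n + n)) : 'M[R]_n :=
  symp ((col_mx (0 : 'M[R]_n) (Jcan nu))^T *m Y *m (row_mx (0 : 'M[R]_n) 1%:M)^T).

Definition Hess (Rm : 'M[R]_n) (M : 'M[R]_n) : 'M[R]_n :=
  let X := Jop M in
  4%:R *: Jadj (Qgram Rm *m lyap (Acl Rm) (symp (X *m Pgram Rm))
                + lyap (Acl Rm)^T (symp (Qgram Rm *m X)) *m Pgram Rm).

End Defs.

(* Main.v *)
Require Import Defs.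
From HB Require Import structures.
From mathcomp Require Import all_boot all_order all_algebra.
From mathcomp Require Import all_classical all_reals all_analysis.
From mathcomp Require Import complex.
From mathcomp Require Import perm.
Import numFieldNormedType.Exports.
Import Order.TTheory GRing.Theory Num.Theory.
Local Open Scope ring_scope.
Set Implicit Arguments.
Unset Strict Implicit.
Unset Printing Implicit Defensive.
Section Alg.
Variable R : realType.

Lemma notunit_eig (k : nat) (F : 'M[R[i]]_k) (z : R[i]) :
  ~~ ((- F^T - z%:M) \in unitmx) -> root (char_poly F) (- z).
Proof.
rewrite unitmxE unitfE negbK -det_tr => /det0P [v vn0 hv].
rewrite -eigenvalue_root_char; apply/eigenvalueP; exists v => //.
move/eqP: hv; rewrite raddfB /= raddfN /= trmxK tr_scalar_mx mulmxBr mulmxN subr_eq0.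
rewrite mul_mx_scalar eqr_oppLR => /eqP ->; by rewrite scaleNr.
Qed.

Lemma lyap_inj (k : nat) (F N : 'M[R]_k) :
  hurwitz F -> F *m N + N *m F^T = 0 -> N = 0.
Proof.
case: k F N => [|k] F N; first by move=> _ _; apply/matrixP => -[].
move=> hF hN.
pose f := real_complex R.
pose Fc := map_mx f F. pose Nc := map_mx f N. pose G := - Fc^T.
have eq1 : Fc *m Nc = Nc *m G.
  have : map_mx f (F *m N + N *m F^T) = 0 by rewrite hN map_mx0.
  rewrite map_mxD !map_mxM -map_trmx => /eqP; rewrite addr_eq0 => /eqP ->.
  by rewrite /G mulmxN.
have inter : forall q, horner_mx Fc q *m Nc = Nc *m horner_mx G q.
  elim/poly_ind => [|q c IH]; first by rewrite !rmorph0 mul0mx mulmx0.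
  rewrite !rmorphD !rmorphM /= !horner_mx_X !horner_mx_C.
  rewrite mulmxDl mulmxDr -!mulmxE -mulmxA eq1 mulmxA IH -mulmxA.
  by rewrite mul_scalar_mx mul_mx_scalar.
have hq : map_poly f (char_poly F) = char_poly Fc by rewrite map_char_poly.
have [r hr] := closed_field_poly_normal (char_poly Fc).
have lc1 : lead_coef (char_poly Fc) = 1 by apply/monicP/char_poly_monic.
rewrite lc1 scale1r in hr.
have U : horner_mx G (char_poly Fc) \in unitmx.
  have hroots : forall z, z \in r -> root (char_poly Fc) z.
    by move=> z zr; rewrite hr root_prod_XsubC.
  rewrite hr rmorph_prod /=.
  elim: r hroots {hr} => [|z r IH] hroots; first by rewrite big_nil unitmx1.
  rewrite big_cons -mulmxE unitmx_mul IH; last first.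
    by move=> w wr; apply: hroots; rewrite inE wr orbT.
  rewrite andbT rmorphB /= horner_mx_X horner_mx_C.
  case/boolP: (G - z%:M \in unitmx) => // hnu.
  have hz := @notunit_eig _ Fc z hnu.
  have h1 := hF z; have h2 := hF (- z).
  rewrite hq in h1 h2.
  have := h1 (hroots z (mem_head _ _)).
  have := h2 hz.
  by case: z {h1 h2 hz hroots hnu} => a b /=; rewrite oppr_lt0 => h3 h4; move: (lt_trans h4 h3); rewrite ltxx.
have : Nc *m horner_mx G (char_poly Fc) = 0 by rewrite -inter Cayley_Hamilton mul0mx.
move=> /(congr1 (mulmx^~ (invmx (horner_mx G (char_poly Fc))))).
rewrite mulmxK // mul0mx => /eqP; rewrite map_mx_eq0 => /eqP //.
Qed.
End Alg.

Section Calc.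
Variable R : realType.
Variable V : normedModType R.

Definition HD (W : normedModType R) (f : V -> W) (x : V) (df : V -> W) :=
  differentiable f x /\ forall v, 'd f x v = df v.
Arguments HD {W}.

Lemma HD_near (W : normedModType R) (f g : V -> W) x dg :
  (\forall y \near x, f y = g y) -> HD g x dg -> HD f x dg.
Proof.
move=> fg [dgx hdg].
have fx : f x = g x := nbhs_singleton fg.
have key : f \o shift x = cst (f x) + 'd g x +o_ 0 id.
  apply/eqaddoP; have /eqaddoP hg := diff_locally dgx.
  move=> e e0; have := hg e e0.
  have fg0 : \forall h \near 0, f (h + x) = g (h + x).
    by rewrite (near_shift 0 x) in fg; move: fg; apply: filterS => h /=; rewrite subr0.
  apply: filterS2 fg0 => h /= E1; by rewrite !fctE /= E1 fx.
have dfx : differentiable f x.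
  have E : 'd f x = 'd g x :> (V -> W).
    by apply: diff_unique => //; apply: diff_continuous.
  apply/diff_locallyP; rewrite E; split => //; exact: diff_continuous dgx.
split; first exact: dfx.
move=> v.
have E : 'd f x = 'd g x :> (V -> W).
  by apply: diff_unique => //; apply: diff_continuous.
by rewrite E hdg.
Qed.
Arguments HD_near {W f g x dg}.

Section HDW.
Variable W : normedModType R.
Implicit Types f g : V -> W.

Lemma HD_uniq f x d1 d2 : HD f x d1 -> HD f x d2 -> forall v, d1 v = d2 v.
Proof. by move=> [_ h1] [_ h2] v; rewrite -h1 -h2. Qed.

Lemma HD_ext f x d1 d2 : HD f x d1 -> (forall v, d1 v = d2 v) -> HD f x d2.
Proof. by move=> [h1 h2] e; split => // v; rewrite h2 e. Qed.

Lemma HD_diff f x : differentiable f x -> HD f x ('d f x).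
Proof. by move=> h; split. Qed.

Lemma HD_cst (c : W) x : HD (fun _ => c) x (fun _ => 0).
Proof.
split; first exact: differentiable_cst.
by move=> v; rewrite (diff_cst c x).
Qed.

Lemma HD_add f g x df dg : HD f x df -> HD g x dg ->
  HD (fun y => f y + g y) x (fun v => df v + dg v).
Proof.
move=> [hf ef] [hg eg]; split.
  exact: (differentiableD hf hg).
by move=> v; rewrite (diffD hf hg) /= ef eg.
Qed.

Lemma HD_opp f x df : HD f x df -> HD (fun y => - f y) x (fun v => - df v).
Proof.
move=> [hf ef]; split; first exact: (differentiableN hf).
move=> v; rewrite (diffN hf); change (- 'd f x v = - df v); by rewrite ef.
Qed.

Lemma HD_sub f g x df dg : HD f x df -> HD g x dg ->
  HD (fun y => f y - g y) x (fun v => df v - dg v).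
Proof. by move=> h1 h2; apply: HD_add => //; apply: HD_opp. Qed.

Lemma HD_scale f x df (k : R) : HD f x df -> HD (fun y => k *: f y) x (fun v => k *: df v).
Proof.
move=> [hf ef]; split; first exact: (differentiableZ k hf).
by move=> v; rewrite (diffZ k hf) /= ef.
Qed.

Lemma HD_sumseq (I : Type) (r : seq I) (F : I -> V -> W) x dF :
  (forall i, HD (F i) x (dF i)) ->
  HD (fun y => \sum_(i <- r) F i y) x (fun v => \sum_(i <- r) dF i v).
Proof.
move=> h; elim: r => [|i r IH].
  have hn : \forall y \near x, \sum_(i <- [::]) F i y = 0.
    by apply: nearW => y; rewrite big_nil.
  have h0 := HD_near hn (HD_cst 0 x).
  by apply: (HD_ext h0) => v; rewrite big_nil.
have h2 := HD_add (h i) IH.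
have hn : \forall y \near x, \sum_(j <- i :: r) F j y = F i y + \sum_(j <- r) F j y.
  by apply: nearW => y; rewrite big_cons.
have h3 := HD_near hn h2.
by apply: (HD_ext h3) => v; rewrite big_cons.
Qed.

Lemma HD_sum n (F : 'I_n -> V -> W) x dF : (forall i, HD (F i) x (dF i)) ->
  HD (fun y => \sum_(i < n) F i y) x (fun v => \sum_(i < n) dF i v).
Proof. exact: HD_sumseq. Qed.

Lemma HD_eq f g x d d' : (forall y, f y = g y) -> HD g x d -> (forall v, d v = d' v) ->
  HD f x d'.
Proof.
move=> e h e'; apply: (HD_ext _ e'); apply: (HD_near _ h); exact: nearW.
Qed.

End HDW.

Lemma HD_mul (f g : V -> R) x df dg : HD f x df -> HD g x dg ->
  HD (fun y => f y * g y) x (fun v => f x * dg v + g x * df v).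
Proof.
move=> [hf ef] [hg eg]; split.
  exact: (differentiableM hf hg).
move=> v; rewrite (diffM hf hg).
by change (f x *: 'd g x v + g x *: 'd f x v = f x * dg v + g x * df v); rewrite ef eg.
Qed.

Lemma HD_inv (f : V -> R) x df : HD f x df -> f x != 0 ->
  HD (fun y => (f y)^-1) x (fun v => - (f x) ^- 2 * df v).
Proof.
move=> [hf ef] h0; split.
  exact: (differentiableV hf h0).
move=> v; rewrite (diffV hf h0).
by change (- (f x) ^- 2 *: 'd f x v = - (f x) ^- 2 * df v); rewrite ef.
Qed.


Definition mcoord (a b : nat) (i : 'I_a) (j : 'I_b) (M : 'M[R]_(a, b)) : R := M i j.
Lemma mcoord_linear a b i j : linear (@mcoord a b i j).
Proof. by move=> k u v; rewrite /mcoord !mxE. Qed.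
HB.instance Definition _ a b i j :=
  GRing.isLinear.Build R 'M[R]_(a, b) R _ (@mcoord a b i j) (@mcoord_linear a b i j).

Lemma HD_entry a b (f : V -> 'M[R]_(a, b)) x df i j :
  HD f x df -> HD (fun y => f y i j) x (fun v => df v i j).
Proof.
move=> [hf ef].
have cc : continuous (@mcoord a b i j) by exact: coord_continuous.
have hc : differentiable (@mcoord a b i j) (f x) by exact: linear_differentiable.
change (HD (@mcoord a b i j \o f) x (fun v => df v i j)).
split; first exact: differentiable_comp.
move=> v; rewrite (diff_comp hf hc) /= (diff_lin _ cc) /=.
by rewrite ef.
Qed.

Lemma Dif_mx a b (f : V -> 'M[R]_(a, b)) x :
  (forall i j, differentiable (fun y => f y i j) x) -> differentiable f x.
Proof.
move=> h.
have -> : f = (fun y => \sum_(i < a) \sum_(j < b) f y i j *: delta_mx i j).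
  by apply/funext => y; rewrite [LHS]matrix_sum_delta.
apply: (proj1 (HD_sum _)) => i.
apply: (HD_sum (dF := fun j v => 'd (fun y => f y i j) x v *: delta_mx i j)) => j.
split; first by apply: differentiableZl.
by move=> v; rewrite diffZl.
Qed.

Lemma HD_mx a b (f : V -> 'M[R]_(a, b)) x (df : V -> 'M[R]_(a, b)) :
  (forall i j, HD (fun y => f y i j) x (fun v => df v i j)) -> HD f x df.
Proof.
move=> h.
have hf : differentiable f x.
  have -> : f = (fun y => \sum_(i < a) \sum_(j < b) f y i j *: delta_mx i j).
    by apply/funext => y; rewrite [LHS]matrix_sum_delta.
  apply: (proj1 (HD_sum _)) => i.
  apply: (HD_sum (dF := fun j v => 'd (fun y => f y i j) x v *: delta_mx i j)) => j.
  split; first by apply: differentiableZl; case: (h i j).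
  by move=> v; rewrite diffZl //; case: (h i j).
split => // v; apply/matrixP => i j.
have [_ e1] := HD_entry i j (HD_diff hf).
have [_ e2] := h i j.
by rewrite -e1 e2.
Qed.


Lemma HD_mulmx a b c (f : V -> 'M[R]_(a, b)) (g : V -> 'M[R]_(b, c)) x
  (df : V -> 'M[R]_(a, b)) (dg : V -> 'M[R]_(b, c)) :
  HD f x df -> HD g x dg ->
  HD (fun y => f y *m g y) x (fun v => df v *m g x + f x *m dg v).
Proof.
move=> hf hg; apply: HD_mx => i j.
have h := HD_sum (fun k => HD_mul (HD_entry i k hf) (HD_entry k j hg)).
apply: (HD_eq _ h) => [y|v]; first by rewrite !mxE.
have -> : (df v *m g x + f x *m dg v) i j = (df v *m g x) i j + (f x *m dg v) i j.
  by rewrite mxE.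
rewrite !mxE -big_split /=; apply: eq_bigr => k _.
by rewrite addrC [g x k j * _]mulrC.
Qed.

Lemma HD_lin a b c d (L : {linear 'M[R]_(a, b) -> 'M[R]_(c, d)})
  (f : V -> 'M[R]_(a, b)) x (df : V -> 'M[R]_(a, b)) :
  HD f x df -> HD (fun y => L (f y)) x (fun v => L (df v)).
Proof.
move=> hf.
have E : forall M : 'M[R]_(a, b), L M = \sum_(i < a) \sum_(j < b) M i j *: L (delta_mx i j).
  move=> M; rewrite {1}[M]matrix_sum_delta linear_sum; apply: eq_bigr => i _.
  by rewrite linear_sum; apply: eq_bigr => j _; rewrite linearZ.
apply: HD_mx => k l.
have h : HD (fun y => \sum_(i < a) \sum_(j < b) f y i j * L (delta_mx i j) k l) x
            (fun v => \sum_(i < a) \sum_(j < b) df v i j * L (delta_mx i j) k l).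
  apply: HD_sum => i; apply: HD_sum => j.
  have := HD_mul (HD_entry i j hf) (HD_cst (L (delta_mx i j) k l) x).
  by move/HD_ext; apply => v; rewrite mulr0 add0r mulrC.
apply: (HD_eq _ h) => [y|v]; rewrite E summxE; apply: eq_bigr => i _;
  rewrite summxE; apply: eq_bigr => j _; by rewrite mxE.
Qed.

Lemma HD_tr a b (f : V -> 'M[R]_(a, b)) x (df : V -> 'M[R]_(a, b)) :
  HD f x df -> HD (fun y => (f y)^T) x (fun v => (df v)^T).
Proof. exact: (HD_lin (trmx : {linear _ -> _})). Qed.

Lemma HD_trace a (f : V -> 'M[R]_a) x (df : V -> 'M[R]_a) :
  HD f x df -> HD (fun y => \tr (f y)) x (fun v => \tr (df v)).
Proof. move=> hf; exact: HD_sum (fun i => HD_entry i i hf). Qed.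

Lemma Dif_prod n (F : 'I_n -> V -> R) x :
  (forall i, differentiable (F i) x) -> differentiable (fun y => \prod_(i < n) F i y) x.
Proof.
move=> h.
suff: forall r : seq 'I_n, HD (fun y => \prod_(i <- r) F i y) x
   ('d (fun y => \prod_(i <- r) F i y) x) by case/(_ (index_enum _)).
elim=> [|i r [IH _]].
  have hn : \forall y \near x, \prod_(i <- [::]) F i y = 1.
    by apply: nearW => y; rewrite big_nil.
  have h0 := HD_near hn (HD_cst (1 : R) x).
  by case: h0 => h0 _; exact: HD_diff.
have h2 := HD_mul (HD_diff (h i)) (HD_diff IH).
have hn : \forall y \near x, \prod_(j <- i :: r) F j y = F i y * \prod_(j <- r) F j y.
  by apply: nearW => y; rewrite big_cons.
by case: (HD_near hn h2) => h3 _; exact: HD_diff.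
Qed.

Lemma Dif_det n (f : V -> 'M[R]_n) x :
  (forall i j, differentiable (fun y => f y i j) x) ->
  differentiable (fun y => \det (f y)) x.
Proof.
move=> h.
have := @HD_sumseq _ _ (index_enum {perm 'I_n})
  (fun s y => (-1) ^+ s * \prod_i f y i (s i)) x
  (fun s => 'd (fun y => (-1) ^+ s * \prod_i f y i (s i)) x).
case=> [s|//].
apply: HD_diff; apply: differentiableM; first exact: differentiable_cst.
by apply: Dif_prod => i; apply: h.
Qed.


Lemma HD_id x : HD (fun y : V => y) x (fun v => v).
Proof.
have h := @is_diff_id R V x.
split; first exact: (@ex_diff _ _ _ _ _ _ _ h).
by move=> v; rewrite (@diff_val _ _ _ _ _ _ _ h).
Qed.

Lemma Dif_near (W : normedModType R) (f g : V -> W) x :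
  (\forall y \near x, f y = g y) -> differentiable g x -> differentiable f x.
Proof. by move=> e hg; case: (HD_near e (HD_diff hg)). Qed.

Lemma unit_near n (g : V -> 'M[R]_n) x :
  (forall i j, differentiable (fun y => g y i j) x) -> g x \in unitmx ->
  \forall y \near x, g y \in unitmx.
Proof.
move=> h u.
have c := differentiable_continuous (Dif_det h).
have nz : \det (g x) != 0 by rewrite -unitfE.
have H := cvgr_neq0 _ c nz.
near=> y; rewrite unitmxE unitfE; near: y; exact: H.
Unshelve. all: by end_near. Qed.

Lemma Dif_invmx n (g : V -> 'M[R]_n) x :
  (forall i j, differentiable (fun y => g y i j) x) -> g x \in unitmx ->
  differentiable (fun y => invmx (g y)) x.
Proof.
move=> h u; apply: Dif_mx => i j.
have hu := unit_near h u.
apply: (@Dif_near _ _ (fun y => (\det (g y))^-1 *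
   ((-1) ^+ (j + i) * \det (row' j (col' i (g y))))) _).
  by apply: filterS hu => y uy; rewrite /invmx uy !mxE.
apply: differentiableM.
  apply: differentiableV; first exact: Dif_det.
  by rewrite -unitfE.
apply: differentiableM; first exact: differentiable_cst.
apply: Dif_det => a b.
by apply: (Dif_near (g := fun y => g y (lift j a) (lift i b))) => //; apply: nearW => y; rewrite !mxE.
Qed.

End Calc.

Section Lyap.
Variable R : realType.

Definition LO k (F N : 'M[R]_k) : 'M[R]_k := F *m N + N *m F^T.
Lemma LO_linear k (F : 'M[R]_k) : linear (LO F).
Proof.
move=> c u v; rewrite /LO mulmxDr mulmxDl -scalemxAr -scalemxAl.
by rewrite scalerDr addrACA.
Qed.
HB.instance Definition _ k (F : 'M[R]_k) :=
  GRing.isLinear.Build R 'M[R]_k 'M[R]_k _ (LO F) (LO_linear F).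

Definition Lmat k (F : 'M[R]_k) : 'M[R]_(k * k) := lin_mx (LO F).
Definition Lsol k (F M : 'M[R]_k) : 'M[R]_k :=
  vec_mx (- mxvec M *m invmx (Lmat F)).

Lemma LmatE k (F N : 'M[R]_k) : mxvec N *m Lmat F = mxvec (LO F N).
Proof. exact: mul_vec_lin. Qed.

Lemma Lsol_eq k (F M : 'M[R]_k) : Lmat F \in unitmx -> LO F (Lsol F M) + M = 0.
Proof.
move=> u; apply: (can_inj mxvecK); rewrite linearD /= -LmatE /Lsol vec_mxK.
by rewrite mulmxKV // linear0 addNr.
Qed.

Lemma Lsol_uniq k (F M N : 'M[R]_k) : Lmat F \in unitmx -> LO F N + M = 0 ->
  N = Lsol F M.
Proof.
move=> u /eqP; rewrite addr_eq0 => /eqP e.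
have : mxvec N *m Lmat F = - mxvec M by rewrite LmatE e linearN.
move=> /(congr1 (mulmx^~ (invmx (Lmat F)))); rewrite mulmxK // => e2.
by rewrite /Lsol -e2 mxvecK.
Qed.

Lemma hurwitz_Lmat k (F : 'M[R]_k) : hurwitz F -> Lmat F \in unitmx.
Proof.
move=> hF; rewrite unitmxE unitfE; apply/negP => /det0P [v vn0 hv].
have : LO F (vec_mx v) = 0.
  by rewrite -[LO F _]/((LO F : {linear _ -> _}) (vec_mx v)) -mx_rV_lin hv linear0.
move=> /(lyap_inj hF) /(congr1 mxvec); rewrite vec_mxK linear0 => v0.
by move: vn0; rewrite v0 eqxx.
Qed.

Lemma lyapE k (F M : 'M[R]_k) : Lmat F \in unitmx -> lyap F M = Lsol F M.
Proof.
move=> u; apply: xget_unique; first exact: Lsol_eq.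
by move=> N hN; apply: Lsol_uniq.
Qed.

Lemma hurwitz_tr k (F : 'M[R]_k) : hurwitz F -> hurwitz F^T.
Proof.
have E : char_poly F^T = char_poly F.
  rewrite /char_poly -det_tr; congr (\det _).
  by rewrite /char_poly_mx raddfB /= tr_scalar_mx map_trmx trmxK.
by move=> h z; rewrite E; exact: h.
Qed.

End Lyap.

Section LyapCalc.
Variable R : realType.
Variable V : normedModType R.

Lemma Dif_Lmat k (F : V -> 'M[R]_k) x dF : HD F x dF ->
  forall i j, differentiable (fun y => Lmat (F y) i j) x.
Proof.
move=> hF i j.
pose E : 'M[R]_k := vec_mx (delta_mx 0 i).
have h1 := HD_add (HD_mulmx hF (HD_cst E x)) (HD_mulmx (HD_cst E x) (HD_tr hF)).
have h2 := HD_entry 0 j (HD_lin (mxvec : {linear 'M[R]_k -> 'rV[R]_(k * k)}) h1).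
apply: (Dif_near _ (proj1 h2)); apply: nearW => y.
by rewrite /Lmat /lin_mx /lin1_mx mxE.
Qed.

Lemma HD_Lsol k (F M : V -> 'M[R]_k) x dF dM : HD F x dF -> HD M x dM ->
  Lmat (F x) \in unitmx ->
  HD (fun y => Lsol (F y) (M y)) x
    (fun v => Lsol (F x) (dF v *m Lsol (F x) (M x) + Lsol (F x) (M x) *m (dF v)^T + dM v)).
Proof.
move=> hF hM u.
have hL := Dif_Lmat hF.
have dY : differentiable (fun y => Lsol (F y) (M y)) x.
  have h1 := HD_lin (mxvec : {linear 'M[R]_k -> 'rV[R]_(k * k)}) hM.
  have h2 := HD_mulmx (HD_opp h1) (HD_diff (Dif_invmx hL u)).
  exact: (proj1 (HD_lin (vec_mx : {linear 'rV[R]_(k * k) -> 'M[R]_k}) h2)).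
pose Y := fun y => Lsol (F y) (M y).
have hu := unit_near hL u.
have hPhi := HD_add (HD_add (HD_mulmx hF (HD_diff dY)) (HD_mulmx (HD_diff dY) (HD_tr hF))) hM.
have h0 : HD (fun y => F y *m Y y + Y y *m (F y)^T + M y) x (fun _ => 0).
  apply: (HD_near _ (HD_cst 0 x)).
  near=> y; apply: Lsol_eq; near: y; exact: hu.
split => // v.
have e := HD_uniq hPhi h0 v.
apply: Lsol_uniq => //.
rewrite /LO -e !addrA; congr (_ + _ + _).
by rewrite addrC addrA.
Unshelve. all: by end_near.
Qed.

End LyapCalc.

Section LyapAlg.
Variable R : realType.
Variables (k : nat) (A : 'M[R]_k).
Hypotheses (u : Lmat A \in unitmx) (uT : Lmat A^T \in unitmx).

Lemma Lsol_tr M : (Lsol A M)^T = Lsol A M^T.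
Proof.
apply: Lsol_uniq => //.
have := Lsol_eq M u => /(congr1 trmx); rewrite linear0 => <-.
rewrite /LO !linearD /= !trmx_mul trmxK addrC [in RHS]addrC; congr (_ + _); exact: addrC.
Qed.

Lemma Lsol_sym M : M^T = M -> (Lsol A M)^T = Lsol A M.
Proof. by move=> h; rewrite Lsol_tr h. Qed.

Lemma LsolT_sym M : M^T = M -> (Lsol A^T M)^T = Lsol A^T M.
Proof.
move=> h; apply: Lsol_uniq => //.
have := Lsol_eq M uT => /(congr1 trmx); rewrite linear0 => <-.
rewrite /LO !linearD /= !trmx_mul !trmxK h addrC [in RHS]addrC; congr (_ + _); exact: addrC.
Qed.

Lemma Lsol_lin a M1 M2 : Lsol A (a *: M1 + M2) = a *: Lsol A M1 + Lsol A M2.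
Proof.
symmetry; apply: Lsol_uniq => //.
rewrite linearP /= addrACA -scalerDr.
by rewrite !Lsol_eq // scaler0 addr0.
Qed.

Lemma Lsol0 : Lsol A 0 = 0.
Proof. by rewrite /Lsol linear0 oppr0 mul0mx linear0. Qed.

Lemma Lsol_scale a M : Lsol A (a *: M) = a *: Lsol A M.
Proof. by rewrite -[a *: M]addr0 Lsol_lin Lsol0 addr0. Qed.

Lemma Lsol_add M1 M2 : Lsol A (M1 + M2) = Lsol A M1 + Lsol A M2.
Proof. by rewrite -[M1 in LHS]scale1r Lsol_lin scale1r. Qed.

Lemma trLL M N : \tr (Lsol A^T M *m N) = \tr (M *m Lsol A N).
Proof.
have := Lsol_eq M uT; rewrite /LO trmxK => /eqP; rewrite addrC addr_eq0 => /eqP eU.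
have := Lsol_eq N u; rewrite /LO => /eqP; rewrite addrC addr_eq0 => /eqP eV.
set U := Lsol A^T M in eU *; set W := Lsol A N in eV *.
rewrite eU eV mulmxN mulNmx !mulmxDr !mulmxDl !raddfN !raddfD /=.
by rewrite !mulmxA [\tr (U *m W *m A^T)]mxtrace_mulC mulmxA [LHS]addrC.
Qed.


Lemma half_double (x : R) : 2^-1 * (x + x) = x.
Proof. by rewrite -mulr2n -[x *+ 2]mulr_natl mulrA mulVf ?mul1r // pnatr_eq0. Qed.

Lemma tr_sym_l (Z N : 'M[R]_k) : N^T = N -> \tr (symp Z *m N) = \tr (Z *m N).
Proof.
move=> hN; rewrite /symp -scalemxAl mxtraceZ mulmxDl raddfD /=.
have -> : \tr (Z^T *m N) = \tr (Z *m N).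
  by rewrite -mxtrace_tr trmx_mul trmxK hN mxtrace_mulC.
exact: half_double.
Qed.

Lemma tr_sym_r (U Z : 'M[R]_k) : U^T = U -> \tr (U *m symp Z) = \tr (U *m Z).
Proof. by move=> hU; rewrite mxtrace_mulC tr_sym_l // mxtrace_mulC. Qed.

Lemma symp_sym (Z : 'M[R]_k) : (symp Z)^T = symp Z.
Proof. by rewrite /symp linearZ /= linearD /= trmxK addrC. Qed.

Lemma trT3 (S1 S2 Z : 'M[R]_k) : S1^T = S1 -> S2^T = S2 ->
  \tr (S1 *m (S2 *m Z^T)) = \tr (S1 *m (Z *m S2)).
Proof.
move=> h1 h2; rewrite -mxtrace_tr !trmx_mul trmxK h1 h2.
by rewrite mxtrace_mulC mulmxA.
Qed.

Variables (q : nat) (Cc : 'M[R]_(q, k)) (BB : 'M[R]_k).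
Hypothesis hBB : BB^T = BB.

Lemma final_alg (X Y : 'M[R]_k) :
  let P := Lsol A BB in let Q := Lsol A^T (Cc^T *m Cc) in
  let W := Lsol A (X *m P + P *m X^T) in
  let dP := Lsol A (Y *m P + P *m Y^T) in
  \tr (Cc *m Lsol A (Y *m W + W *m Y^T + (X *m dP + dP *m X^T)) *m Cc^T)
  = 4%:R * \tr ((Q *m Lsol A (symp (X *m P)) + Lsol A^T (symp (Q *m X)) *m P)^T *m Y).
Proof.
move=> P Q W dP.
have hP : P^T = P by apply: Lsol_sym.
have hQ : Q^T = Q by apply: LsolT_sym; rewrite trmx_mul trmxK.
have e2 : forall Z : 'M[R]_k, Lsol A (Z *m P + P *m Z^T) = 2%:R *: Lsol A (symp (Z *m P)).
  move=> Z; rewrite /symp Lsol_scale scalerA mulfV ?pnatr_eq0 // scale1r.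
  by rewrite trmx_mul hP.
have hN : forall Z : 'M[R]_k, (Lsol A (symp Z))^T = Lsol A (symp Z).
  by move=> Z; apply: Lsol_sym; apply: symp_sym.
have hU : (Lsol A^T (symp (Q *m X)))^T = Lsol A^T (symp (Q *m X)).
  by apply: LsolT_sym; apply: symp_sym.
set N1 := Lsol A (symp (X *m P)) in hN *.
set N2 := Lsol A (symp (Y *m P)).
have eW : W = 2%:R *: N1 by rewrite /W e2.
have edP : dP = 2%:R *: N2 by rewrite /dP e2.
have hW : W^T = W by rewrite eW linearZ /= hN.
have hdP : dP^T = dP by rewrite edP linearZ /= hN.
have F3 : \tr (Cc *m Lsol A (Y *m W + W *m Y^T + (X *m dP + dP *m X^T)) *m Cc^T)
   = \tr (Q *m (Y *m W + W *m Y^T + (X *m dP + dP *m X^T))).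
  by rewrite mxtrace_mulC mulmxA trLL.
rewrite F3 !mulmxDr !raddfD /= trT3 // trT3 //.
rewrite !trmx_mul hQ hU hP mulmxDl raddfD /=.
have hN1 : N1^T = N1 by apply: hN.
have hN2 : N2^T = N2 by apply: hN.
have t1 : \tr (N1^T *m Q *m Y) = \tr (Q *m (Y *m N1)).
  by rewrite hN1 -mulmxA mxtrace_mulC -mulmxA.
have t2 : \tr (P *m Lsol A^T (symp (Q *m X)) *m Y) = \tr (Q *m (X *m N2)).
  rewrite -mulmxA mxtrace_mulC -mulmxA -(tr_sym_r (Y *m P) hU).
  by rewrite trLL // tr_sym_l // -mulmxA.
rewrite t1 t2 eW edP -!scalemxAr !mxtraceZ.
rewrite mulrDr; congr (_ + _); by rewrite -mulrDl -natrD.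
Qed.

End LyapAlg.

Lemma frob_Jadj (R : realType) (nu : nat) (Z : 'M[R]_(nu.*2 + nu.*2)) (K : 'M[R]_(nu.*2)) :
  K^T = K -> frob (4%:R *: Jadj Z) K = 4%:R * \tr (Z^T *m Jop K).
Proof.
move=> hK; rewrite /frob /Jadj /Jop linearZ /= symp_sym -scalemxAl mxtraceZ.
congr (_ * _); rewrite tr_sym_l //.
rewrite -[RHS]mxtrace_tr !trmx_mul !trmxK hK.
set c' := (col_mx _ _)^T; set r' := (row_mx _ _)^T.
by rewrite (mulmxA r') -(mulmxA (r' *m K)) [RHS]mxtrace_mulC !mulmxA.
Qed.

Theorem lemma5 (R : realType) (nu mu1 mu2 p p0 : nat)
  (hp : (0 < p)%N) (hp0 : (0 < p0)%N)
  (A : 'M[R]_(nu.*2)) (B1 : 'M[R]_(nu.*2, mu1.*2)) (B2 : 'M[R]_(nu.*2, mu2.*2))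
  (C : 'M[R]_(p, nu.*2)) (D : 'M[R]_(p, mu1.*2)) (C0 : 'M[R]_(p0, nu.*2))
  (D0 : 'M[R]_(p0, mu2.*2)) (b : 'M[R]_(nu.*2, mu2.*2 + p))
  (Rm : 'M[R]_(nu.*2)) :
  symmetricb Rm ->
  hurwitz (Acl A B2 C D b Rm) ->
  let E := (fun X : 'M[R]_(nu.*2) => Ecost A B1 B2 C D C0 D0 b X : R^o) in
  (\forall X \near Rm, differentiable E X) /\
  (forall H : 'M[R]_(nu.*2), differentiable (fun X => 'd E X H) Rm) /\
  (forall H K : 'M[R]_(nu.*2), symmetricb H -> symmetricb K ->
     'd (fun X => 'd E X H) Rm K
       = frob (Hess A B1 B2 C D C0 D0 b Rm H) K).
Proof.
move=> hsym hH E.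
pose Ac := fun X : 'M[R]_(nu.*2) => Acl A B2 C D b X.
have eA : forall X, Ac X = Ac 0 + Jop X.
  move=> X; rewrite /Ac /Acl /Jop mul_col_mx mul_col_row !mul0mx !mulmx0 mulmx1.
  rewrite add_block_mx !addr0; congr block_mx.
  by rewrite /ctrl_a mulmx0 add0r addrC.
have hJ : forall X, HD (fun Y : 'M[R]_(nu.*2) => Jop Y) X (fun v => Jop v).
  move=> X.
  have h := HD_mulmx (HD_mulmx (HD_cst (col_mx (0 : 'M[R]_(nu.*2)) (Jcan R nu)) X) (HD_id X))
              (HD_cst (row_mx (0 : 'M[R]_(nu.*2)) 1%:M) X).
  by apply: (HD_ext h) => v; rewrite mul0mx add0r mulmx0 addr0.
have hAc : forall X, HD Ac X (fun v => Jop v).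
  move=> X; apply: (HD_eq eA (HD_add (HD_cst (Ac 0) X) (hJ X))) => v.
  by rewrite add0r.
have hL : forall X i j, differentiable (fun Y => Lmat (Ac Y) i j) X.
  by move=> X; apply: Dif_Lmat; exact: hAc.
pose S := fun X => Lmat (Ac X) \in unitmx.
have hS : forall X, S X -> \forall Y \near X, S Y.
  by move=> X sX; apply: unit_near => //; exact: hL.
have u : S Rm by apply: hurwitz_Lmat.
have uT : Lmat (Ac Rm)^T \in unitmx by apply/hurwitz_Lmat/hurwitz_tr.
pose BB := Bcl B1 B2 D b *m (Bcl B1 B2 D b)^T.
pose Cc := Ccl C0 D0 b.
pose Ps := fun X => Lsol (Ac X) BB.
have hEeq : forall X, S X -> E X = \tr (Cc *m Ps X *m Cc^T).
  by move=> X sX; rewrite /E /Ecost /Pgram lyapE.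
pose dPs := fun X v => Lsol (Ac X) (Jop v *m Ps X + Ps X *m (Jop v)^T).
have hPs : forall X, S X -> HD Ps X (dPs X).
  move=> X sX; have := HD_Lsol (hAc X) (HD_cst BB X) sX.
  by move/HD_ext; apply=> v; rewrite addr0.
have hE : forall X, S X -> HD E X (fun v => \tr (Cc *m dPs X v *m Cc^T)).
  move=> X sX.
  have h := HD_trace (HD_mulmx (HD_mulmx (HD_cst Cc X) (hPs X sX)) (HD_cst Cc^T X)).
  apply: (HD_near _ (HD_ext h _)).
    by near=> Y; apply: hEeq; near: Y; apply: hS.
  by move=> v; rewrite mul0mx add0r mulmx0 addr0.
have main : forall H : 'M[R]_(nu.*2), HD (fun X => 'd E X H) Rm
   (fun K => \tr (Cc *m Lsol (Ac Rm) (Jop K *m Lsol (Ac Rm) (Jop H *m Ps Rm + Ps Rm *m (Jop H)^T)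
        + Lsol (Ac Rm) (Jop H *m Ps Rm + Ps Rm *m (Jop H)^T) *m (Jop K)^T
        + (Jop H *m dPs Rm K + dPs Rm K *m (Jop H)^T)) *m Cc^T)).
  move=> H.
  pose Mf := fun X => Jop H *m Ps X + Ps X *m (Jop H)^T.
  have hM : HD Mf Rm (fun v => Jop H *m dPs Rm v + dPs Rm v *m (Jop H)^T).
    have h := HD_add (HD_mulmx (HD_cst (Jop H) Rm) (hPs Rm u)) (HD_mulmx (hPs Rm u) (HD_cst (Jop H)^T Rm)).
    by apply: (HD_ext h) => v; rewrite mul0mx add0r mulmx0 addr0.
  have hW := HD_Lsol (hAc Rm) hM u.
  have h := HD_trace (HD_mulmx (HD_mulmx (HD_cst Cc Rm) hW) (HD_cst Cc^T Rm)).
  apply: (HD_near _ (HD_ext h _)).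
    near=> X; have sX : S X by near: X; apply: hS.
    by rewrite (proj2 (hE X sX) H).
  by move=> v; rewrite mul0mx add0r mulmx0 addr0.
split.
  near=> X; have sX : S X by near: X; apply: hS.
  exact: (proj1 (hE X sX)).
split; first by move=> H; exact: (proj1 (main H)).
move=> H K hHs hKs.
rewrite (proj2 (main H) K).
have hBB : BB^T = BB by rewrite /BB trmx_mul trmxK.
have := @final_alg R _ (Ac Rm) u uT _ Cc BB hBB (Jop H) (Jop K).
cbv zeta => ->.
rewrite /Hess /Pgram /Qgram !lyapE // frob_Jadj //.
Unshelve. all: by end_near.
Qed.
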